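(* Let $\mathfrak n=\mathfrak v\oplus\mathfrak z$ be a Lie algebra of Heisenberg type with $\mathfrak z=\mathbb R^m$. Then every Lagrangian subspace $\mathcal L\subset\mathfrak v$ is a $C^+(m)$-submodule of $\mathfrak v$, i.e. $J_zJ_w(\mathcal L)\subset\mathcal L$ for all $z,w\in\mathfrak z$.
   Context: Lie algebra of Heisenberg type: $\mathfrak z=\mathbb R^m$ with standard inner product $\langle\cdot,\cdot\rangle$; $\mathfrak v$ is a finite-dimensional real module over the Clifford algebra $C(m)$ (relations $z^2=-\langle z,z\rangle 1$) with an inner product $(\cdot,\cdot)$ for which each $J_z$ is skew-symmetric; $\mathfrak z$ is central and $\langle z,[u,v]\rangle=(J_zu,v)$ for $u,v\in\mathfrak v$. $C^+(m)$ is the even Clifford subalgebra, generated by products $zw$ of two elements of $\mathbb R^m$. A Lagrangian subspace is a subspace $\mathcal L\subset\mathfrak v$ with $[\mathcal L,\mathcal L]=0$ and $\dim\mathcal L=\frac12\dim\mathfrak v$. *)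

(* Defs.v *)
From HB Require Import structures.
From mathcomp Require Import all_boot all_order all_algebra.
From mathcomp Require Import reals.
Set Implicit Arguments. Unset Strict Implicit. Unset Printing Implicit Defensive.
Import Order.TTheory GRing.Theory Num.Theory.
Local Open Scope ring_scope.

(* v = 'rV[R]_n (row vectors), z = 'rV[R]_m with standard inner product.
   J i : 'M_n is J_{e_i}; J_z acts on u : 'rV_n by u |-> u *m J_z. *)
Definition Jz (R : realType) (m n : nat) (J : 'I_m -> 'M[R]_n) (z : 'rV[R]_m)
  : 'M[R]_n := \sum_(i < m) z 0 i *: J i.

Definition zdot (R : realType) (m : nat) (z w : 'rV[R]_m) : R := (z *m w^T) 0 0.

Definition vip (R : realType) (n : nat) (G : 'M[R]_n) (u v : 'rV[R]_n) : R :=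
  (u *m G *m v^T) 0 0.

(* (v, (.,.), J) is a C(m)-module with J_z skew-symmetric: data of an
   H-type Lie algebra n = v (+) z. *)
Definition heisenberg_type (R : realType) (m n : nat) (G : 'M[R]_n)
  (J : 'I_m -> 'M[R]_n) : Prop :=
  [/\ G^T = G,
      (forall u : 'rV[R]_n, u != 0 -> 0 < vip G u u),
      (forall z : 'rV[R]_m, Jz J z *m Jz J z = - (zdot z z) *: 1%:M) &
      (forall (z : 'rV[R]_m) (u v : 'rV[R]_n),
          vip G (u *m Jz J z) v = - vip G u (v *m Jz J z))].

(* the Lie bracket [u,v] in z, determined by <z,[u,v]> = (J_z u, v) *)
Definition hbracket (R : realType) (m n : nat) (G : 'M[R]_n)
  (J : 'I_m -> 'M[R]_n) (u v : 'rV[R]_n) : 'rV[R]_m :=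
  \row_(i < m) vip G (u *m J i) v.

Definition lagrangian (R : realType) (m n : nat) (G : 'M[R]_n)
  (J : 'I_m -> 'M[R]_n) (L : 'M[R]_n) : Prop :=
  (forall u v : 'rV[R]_n, (u <= L)%MS -> (v <= L)%MS -> hbracket G J u v = 0)
  /\ (\rank L).*2 = n.

(* Main.v *)
Require Import Defs.
From HB Require Import structures.
From mathcomp Require Import all_boot all_order all_algebra.
From mathcomp Require Import reals.
Import Order.TTheory GRing.Theory Num.Theory.
Local Open Scope ring_scope.

Lemma entry_lem (R : realType) (n : nat) (A B : 'M[R]_n) (i j : 'I_n) :
  (A *m B^T) i j = (row i A *m (row j B)^T) 0 0.
Proof. by rewrite !mxE; apply: eq_bigr => k _; rewrite !mxE. Qed.

Theorem corollary4p2 (R : realType) (m n : nat) (G : 'M[R]_n)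
  (J : 'I_m -> 'M[R]_n) (L : 'M[R]_n) :
  heisenberg_type G J -> lagrangian G J L ->
  forall z w : 'rV[R]_m, (L *m (Jz J z *m Jz J w) <= L)%MS.
Proof.
move=> [GT Gpos Jsq Jskew] [Hbr Hrk] z w.
have zeroJ : forall x : 'rV[R]_m, zdot x x = 0 -> Jz J x = 0.
  move=> x hx; apply/row_matrixP => i; rewrite row0 rowE.
  set u := delta_mx 0 i *m Jz J x.
  apply/eqP; apply/negPn/negP => hu.
  have := Gpos _ hu; rewrite /u Jskew -mulmxA Jsq hx oppr0 scale0r mulmx0.
  by rewrite /vip linear0 mulmx0 mxE oppr0 ltxx.
have unitJ : forall x : 'rV[R]_m, zdot x x != 0 -> Jz J x \in unitmx.
  move=> x hx.
  have [] := @mulmx1_unit _ _ (Jz J x) (- (zdot x x)^-1 *: Jz J x) => //.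
  by rewrite -scalemxAr Jsq scalerA mulrNN mulVf // scale1r.
have Gu : G \in unitmx.
  rewrite -row_free_unit -kermx_eq0; apply/eqP/row_matrixP => i.
  rewrite row0; set u := row i (kermx G).
  have uG : u *m G = 0 by apply/sub_kermxP; rewrite row_sub.
  apply/eqP; apply/negPn/negP => hu.
  by have := Gpos _ hu; rewrite /vip uG mul0mx mxE ltxx.
set K := kermx (G *m L^T).
have rkK : \rank K = \rank L.
  rewrite mxrank_ker -mxrank_tr trmx_mul trmxK mxrankMfree; last first.
    by rewrite row_free_unit unitmx_tr.
  by move: Hrk; rewrite -addnn => Hrk; rewrite -[X in (X - _)%N]Hrk addnK.
have LK : forall x : 'rV[R]_m, (L *m Jz J x <= K)%MS.
  move=> x; apply/sub_kermxP.
  rewrite /Jz mulmx_sumr !mulmx_suml big1 // => k _.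
  rewrite -scalemxAr -!scalemxAl !mulmxA.
  have -> : L *m J k *m G *m L^T = 0; last by rewrite scaler0.
  apply/matrixP => i j; rewrite entry_lem [RHS]mxE !row_mul.
  have /matrixP /(_ 0 k) := Hbr _ _ (row_sub i L) (row_sub j L).
  move=> h; rewrite -(_ : vip G (row i L *m J k) (row j L) = 0) //.
  by move: h; rewrite !mxE.
have eqK : forall x : 'rV[R]_m, zdot x x != 0 -> (K <= L *m Jz J x)%MS.
  move=> x hx; rewrite -(mxrank_leqif_sup (LK x)).2 rkK mxrankMfree //.
  by rewrite row_free_unit unitJ.
have [hz|hz] := eqVneq (zdot z z) 0; first by rewrite zeroJ // mul0mx mulmx0 sub0mx.
have [hw|hw] := eqVneq (zdot w w) 0; first by rewrite (zeroJ w) // !mulmx0 sub0mx.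
rewrite mulmxA.
apply: (submx_trans (submxMr _ (submx_trans (LK z) (eqK w hw)))).
by rewrite -mulmxA Jsq -scalemxAr mulmx1 scalemx_sub.
Qed.
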